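(* Let $E=\mathcal O(0,1,1)\oplus\mathcal O(1,0,1)\oplus\mathcal O(1,1,0)$ on $\mathbb P^1\times\mathbb P^1\times\mathbb P^1$. The discriminant locus $\Delta\subseteq\mathbb P H^0(E)\cong\mathbb P^{11}$ of $E$ is an irreducible hypersurface of degree $6$.
   Context: The discriminant locus is $\Delta=\{[f]\in\mathbb P H^0(\mathbb P^1\times\mathbb P^1\times\mathbb P^1,E) : \mathcal Z(f)\text{ is not reduced of dimension }0\}$, where $\mathcal Z(f)$ is the zero scheme of $f$. A section is $f=(f^{(1)},f^{(2)},f^{(3)})$ with $f^{(i)}$ a bilinear form in the two coordinate pairs $\pi^{(l)}=(\pi^{(l)}_1,\pi^{(l)}_2)$, $l\ne i$. (This is the discriminant relevant to three-player games with two strategies each.) *)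

(* Defs.v *)
From HB Require Import structures.
From mathcomp Require Import all_boot all_order all_algebra.
From mathcomp Require Import mpoly.
Set Implicit Arguments. Unset Strict Implicit. Unset Printing Implicit Defensive.
Import GRing.Theory Num.Theory.
Local Open Scope ring_scope.

(* Coordinates on H^0(P^1 x P^1 x P^1, E) = C^12.
   A section is f = (f^(1), f^(2), f^(3)); f^(i) is bilinear in the two
   coordinate pairs pi^(j), pi^(k) with {j < k} = {1,2,3} \ {i}:
     f^(i)(x, y) = \sum_{a,b} v (vidx i a b) * x_a * y_b.
   (indices are 0-based here). *)
Definition vidx (i : 'I_3) (a b : 'I_2) : 'I_12 := inord (4 * i + 2 * a + b).

Definition oth1 (i : 'I_3) : 'I_3 := if val i == 0%N then inord 1 else inord 0.
Definition oth2 (i : 'I_3) : 'I_3 := if val i == 2%N then inord 1 else inord 2.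

(* a point of (P^1)^3 given by homogeneous coordinates p l = pi^(l) *)
Definition Pt (C : nzRingType) := 'I_3 -> 'I_2 -> C.

Definition bil (C : nzRingType) (v : 'I_12 -> C) (i : 'I_3) (x y : 'I_2 -> C) : C :=
  \sum_(a < 2) \sum_(b < 2) v (vidx i a b) * x a * y b.

Definition fsec (C : nzRingType) (v : 'I_12 -> C) (i : 'I_3) (p : Pt C) : C :=
  bil v i (p (oth1 i)) (p (oth2 i)).

Definition is_zero (C : nzRingType) (v : 'I_12 -> C) (p : Pt C) : Prop :=
  (forall l : 'I_3, exists a : 'I_2, p l a != 0) /\ (forall i, fsec v i p = 0).

Definition proj_eq (C : nzRingType) (p q : Pt C) : Prop :=
  forall l : 'I_3, exists c : C, c != 0 /\ forall a, q l a = c * p l a.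

Definition dfsec (C : nzRingType) (v : 'I_12 -> C) (i : 'I_3) (p u : Pt C) : C :=
  bil v i (u (oth1 i)) (p (oth2 i)) + bil v i (p (oth1 i)) (u (oth2 i)).

(* Zariski tangent space of Z(f) at p is zero: every homogeneous tangent
   vector killed by df_p is in the span of the Euler directions, i.e. is
   zero in T_p (P^1)^3 = (+)_l C^2 / <p l>. *)
Definition reduced_at (C : nzRingType) (v : 'I_12 -> C) (p : Pt C) : Prop :=
  forall u : Pt C, (forall i, dfsec v i p u = 0) ->
    forall l : 'I_3, exists c : C, forall a, u l a = c * p l a.

Definition zero_dim_reduced (C : nzRingType) (v : 'I_12 -> C) : Prop :=
  [/\ exists p, is_zero v p,
      exists (n : nat) (S : 'I_n -> Pt C),
        forall p, is_zero v p -> exists k, proj_eq (S k) p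
    & forall p, is_zero v p -> reduced_at v p].

Definition in_discriminant (C : nzRingType) (v : 'I_12 -> C) : Prop :=
  ~ zero_dim_reduced v.

Definition mirreducible (C : nzRingType) (n : nat) (D : {mpoly C[n]}) : Prop :=
  (1 < msize D)%N /\
  forall q r : {mpoly C[n]}, D = q * r -> (msize q <= 1)%N \/ (msize r <= 1)%N.

(* Main.v *)
Require Import Defs.
From HB Require Import structures.
From mathcomp Require Import all_boot all_order all_algebra.
From mathcomp Require Import mpoly.
From mathcomp Require Import ring zify.
From Stdlib Require Import Classical_Prop.
Import GRing.Theory Num.Theory.
Local Open Scope ring_scope.
Set Implicit Arguments. Unset Strict Implicit.

Section Gen.
Variable R : comNzRingType.
Variable a : 'I_12 -> R.
Local Notation V k := (a (inord k)).
Definition kk0 := V 2*V 6*V 8 - V 2*V 4*V 10 - V 0*V 6*V 9 + V 0*V 4*V 11.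
Definition kk1 := V 3*V 6*V 8 - V 3*V 4*V 10 + V 2*V 7*V 8 - V 2*V 5*V 10
  - V 1*V 6*V 9 + V 1*V 4*V 11 - V 0*V 7*V 9 + V 0*V 5*V 11.
Definition kk2 := V 3*V 7*V 8 - V 3*V 5*V 10 - V 1*V 7*V 9 + V 1*V 5*V 11.
Definition Dform := kk1 ^+ 2 - 4%:R * kk0 * kk2.
End Gen.
Arguments kk0 {R} a. Arguments kk1 {R} a. Arguments kk2 {R} a. Arguments Dform {R} a.


Section Lin.
Variable F : fieldType.
Definition ra (w c a : F) := w - c * a.
Definition rb (w c a : F) := w + c * a.
Definition nz (a0 a1 : F) := (a0 != 0) || (a1 != 0).

Lemma perp (a0 a1 w0 w1 : F) : nz a0 a1 -> a0*w0 + a1*w1 = 0 ->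
  exists c, ra w0 c a1 = 0 /\ rb w1 c a0 = 0.
Proof.
rewrite /ra /rb; case/orP => [h|h] e.
- exists (- w1 / a0); split; last by field.
  apply: (mulfI h); rewrite mulr0 -e; field; exact: h.
- exists (w0 / a1); split; first by field.
  apply: (mulfI h); rewrite mulr0 -e; field; exact: h.
Qed.

Lemma par (a0 a1 b0 b1 : F) : nz a0 a1 -> b0*a1 - b1*a0 = 0 ->
  exists c, b0 = c*a0 /\ b1 = c*a1.
Proof.
case/orP => [h|h] /eqP; rewrite subr_eq0 => /eqP e.
- exists (b0 / a0); split; first by field.
  apply: (mulfI h); rewrite [X in _ = X](_ : _ = b0 * a1 / a0 * a0); last by field.
  by rewrite e; field.
- exists (b1 / a1); split; last by field.
  apply: (mulfI h); rewrite [X in _ = X](_ : _ = b1 * a0 / a1 * a1); last by field.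
  by rewrite -e; field.
Qed.

Lemma par_nz (a0 a1 b0 b1 c : F) : nz b0 b1 -> b0 = c*a0 -> b1 = c*a1 -> c != 0.
Proof. by move=> h e0 e1; apply: contraTneq h => c0; rewrite /nz e0 e1 c0 !mul0r eqxx. Qed.

Lemma e_ex (a0 a1 : F) : nz a0 a1 -> exists e0 e1, e0*a1 - e1*a0 = 1.
Proof.
case/orP => h.
- exists 0, (- a0^-1); rewrite mul0r sub0r mulNr opprK mulVf //.
- exists (a1^-1), 0; rewrite mul0r subr0 mulVf //.
Qed.

Lemma perp2 (w0 w1 : F) : exists a0 a1, nz a0 a1 /\ a0*w0 + a1*w1 = 0.
Proof.
have [h|h] := boolP (nz w0 w1).
- exists (- w1), w0; split; last by ring.
  by move: h; rewrite /nz oppr_eq0 orbC.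
- move: h; rewrite /nz negb_or !negbK => /andP[/eqP -> /eqP ->].
  by exists 1, 0; rewrite /nz oner_eq0 /=; split=> //; ring.
Qed.

Lemma nz_par (a0 a1 c : F) : c * a0 = 0 -> c * a1 = 0 -> nz a0 a1 -> c = 0.
Proof.
move=> h0 h1; case/orP => h; apply/eqP.
- by move/eqP: h0; rewrite mulf_eq0 (negbTE h) orbF.
- by move/eqP: h1; rewrite mulf_eq0 (negbTE h) orbF.
Qed.
End Lin.
Arguments ra {F}. Arguments rb {F}. Arguments nz {F}.
Arguments perp {F a0 a1 w0 w1}. Arguments par {F a0 a1 b0 b1}. Arguments par_nz {F a0 a1 b0 b1 c}.
Arguments e_ex {F a0 a1}. Arguments perp2 {F}. Arguments nz_par {F a0 a1 c}.

Section Core.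
Variable C : numClosedFieldType.
Variable v : 'I_12 -> C.
Local Notation V k := (v (inord k)).
Local Notation k0 := (kk0 v).
Local Notation k1 := (kk1 v).
Local Notation k2 := (kk2 v).

Definition F0 y0 y1 z0 z1 := V 0 * y0 * z0 + V 1 * y0 * z1 + (V 2 * y1 * z0 + V 3 * y1 * z1).
Definition F1 x0 x1 z0 z1 := V 4 * x0 * z0 + V 5 * x0 * z1 + (V 6 * x1 * z0 + V 7 * x1 * z1).
Definition F2 x0 x1 y0 y1 := V 8 * x0 * y0 + V 9 * x0 * y1 + (V 10 * x1 * y0 + V 11 * x1 * y1).
Definition qq (z0 z1 : C) := k0 * z0 ^+ 2 + k1 * z0 * z1 + k2 * z1 ^+ 2.
Definition g0 (z0 z1 : C) := 2%:R * k0 * z0 + k1 * z1.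
Definition g1 (z0 z1 : C) := k1 * z0 + 2%:R * k2 * z1.

Lemma qqM z0 z1 : qq z0 z1 = F2 (-(V 6*z0+V 7*z1)) (V 4*z0+V 5*z1) (-(V 2*z0+V 3*z1)) (V 0*z0+V 1*z1).
Proof. rewrite /qq /F2 /kk0 /kk1 /kk2; ring. Qed.

Lemma euler z0 z1 : z0 * g0 z0 z1 + z1 * g1 z0 z1 = 2%:R * qq z0 z1.
Proof. rewrite /qq /g0 /g1; ring. Qed.

Lemma Dg0 z0 z1 : Dform v * z0 = k1 * g1 z0 z1 - 2%:R * k2 * g0 z0 z1.
Proof. rewrite /Dform /g0 /g1; ring. Qed.
Lemma Dg1 z0 z1 : Dform v * z1 = k1 * g0 z0 z1 - 2%:R * k0 * g1 z0 z1.
Proof. rewrite /Dform /g0 /g1; ring. Qed.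

Definition m2 (a b c d : C) := a * d - b * c.
Lemma three_id z0 z1 w0 w1 t0 t1 :
  let sz := z0^+2 in let mz := z0*z1 in let ez := z1^+2 in
  let sw := w0^+2 in let mw := w0*w1 in let ew := w1^+2 in
  let st := t0^+2 in let mt := t0*t1 in let et := t1^+2 in
  let dA := (z0*w1 - z1*w0) * (z0*t1 - z1*t0) * (w0*t1 - w1*t0) in
  [/\ dA * k0 = m2 mw ew mt et * qq z0 z1 - m2 mz ez mt et * qq w0 w1 + m2 mz ez mw ew * qq t0 t1,
      dA * k1 = - m2 sw ew st et * qq z0 z1 + m2 sz ez st et * qq w0 w1 - m2 sz ez sw ew * qq t0 t1 &
      dA * k2 = m2 sw mw st mt * qq z0 z1 - m2 sz mz st mt * qq w0 w1 + m2 sz mz sw mw * qq t0 t1].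
Proof. rewrite /m2 /qq /=; split; ring. Qed.



Record Rels (x0 x1 y0 y1 z0 z1 al be ga de ep ze : C) : Prop := {
  h1a : ra (V 0*z0 + V 1*z1) al y1 = 0; h1b : rb (V 2*z0 + V 3*z1) al y0 = 0;
  h2a : ra (V 0*y0 + V 2*y1) be z1 = 0; h2b : rb (V 1*y0 + V 3*y1) be z0 = 0;
  h3a : ra (V 4*z0 + V 5*z1) ga x1 = 0; h3b : rb (V 6*z0 + V 7*z1) ga x0 = 0;
  h4a : ra (V 4*x0 + V 6*x1) de z1 = 0; h4b : rb (V 5*x0 + V 7*x1) de z0 = 0;
  h5a : ra (V 8*y0 + V 9*y1) ep x1 = 0; h5b : rb (V 10*y0 + V 11*y1) ep x0 = 0;
  h6a : ra (V 8*x0 + V 10*x1) ze y1 = 0; h6b : rb (V 9*x0 + V 11*x1) ze y0 = 0 }.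

Section WithRels.
Variables x0 x1 y0 y1 z0 z1 al be ga de ep ze : C.
Hypothesis HR : Rels x0 x1 y0 y1 z0 z1 al be ga de ep ze.
Let E1a := ra (V 0*z0 + V 1*z1) al y1. Let E1b := rb (V 2*z0 + V 3*z1) al y0.
Let E2a := ra (V 0*y0 + V 2*y1) be z1. Let E2b := rb (V 1*y0 + V 3*y1) be z0.
Let E3a := ra (V 4*z0 + V 5*z1) ga x1. Let E3b := rb (V 6*z0 + V 7*z1) ga x0.
Let E4a := ra (V 4*x0 + V 6*x1) de z1. Let E4b := rb (V 5*x0 + V 7*x1) de z0.
Let E5a := ra (V 8*y0 + V 9*y1) ep x1. Let E5b := rb (V 10*y0 + V 11*y1) ep x0.
Let E6a := ra (V 8*x0 + V 10*x1) ze y1. Let E6b := rb (V 9*x0 + V 11*x1) ze y0.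
Definition KK := al*de*ep + be*ga*ze.

Lemma G0id : g0 z0 z1 + KK * z1 = -(al*ep)*E4a + al*(-(V 6)*E5a + V 4*E5b) + F2 (-(V 6)) (V 4) (-E1b) E1a
   - ga*ze*E2a + ga*(-(V 2)*E6a + V 0*E6b) + F2 (-E3b) E3a (-(V 2)) (V 0).
Proof. rewrite /E1a /E1b /E2a /E2b /E3a /E3b /E4a /E4b /E5a /E5b /E6a /E6b /KK /ra /rb /g0 /F2 /kk0 /kk1; ring. Qed.

Lemma G1id : g1 z0 z1 - KK * z0 = -(al*ep)*E4b + al*(-(V 7)*E5a + V 5*E5b) + F2 (-(V 7)) (V 5) (-E1b) E1a
   - ga*ze*E2b + ga*(-(V 3)*E6a + V 1*E6b) + F2 (-E3b) E3a (-(V 3)) (V 1).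
Proof. rewrite /E1a /E1b /E2a /E2b /E3a /E3b /E4a /E4b /E5a /E5b /E6a /E6b /KK /ra /rb /g1 /F2 /kk1 /kk2; ring. Qed.

Lemma Qid : qq z0 z1 = ga*al*F2 x0 x1 y0 y1 + ga*F2 x0 x1 (-E1b) E1a + al*F2 (-E3b) E3a y0 y1 + F2 (-E3b) E3a (-E1b) E1a.
Proof. rewrite qqM /E1a /E1b /E3a /E3b /ra /rb /F2; ring. Qed.

Ltac kill := rewrite /E1a /E1b /E2a /E2b /E3a /E3b /E4a /E4b /E5a /E5b /E6a /E6b;
  case: HR => *; repeat match goal with H : _ = 0 |- _ => try rewrite H; clear H end.

Lemma G0z : g0 z0 z1 + KK * z1 = 0.
Proof. rewrite G0id; kill; rewrite /F2; ring. Qed.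
Lemma G1z : g1 z0 z1 - KK * z0 = 0.
Proof. rewrite G1id; kill; rewrite /F2; ring. Qed.
Lemma Qz : F2 x0 x1 y0 y1 = 0 -> qq z0 z1 = 0.
Proof. move=> HF; rewrite Qid HF; kill; rewrite /F2; ring. Qed.

Lemma U0 a0 a1 : F0 a0 a1 z0 z1 = al*(a0*y1 - a1*y0).
Proof. have -> : F0 a0 a1 z0 z1 = al*(a0*y1 - a1*y0) + (a0*E1a + a1*E1b) by rewrite /E1a /E1b /ra /rb /F0; ring. kill; ring. Qed.
Lemma U0' a0 a1 : F0 y0 y1 a0 a1 = be*(a0*z1 - a1*z0).
Proof. have -> : F0 y0 y1 a0 a1 = be*(a0*z1 - a1*z0) + (a0*E2a + a1*E2b) by rewrite /E2a /E2b /ra /rb /F0; ring. kill; ring. Qed.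
Lemma U1 a0 a1 : F1 a0 a1 z0 z1 = ga*(a0*x1 - a1*x0).
Proof. have -> : F1 a0 a1 z0 z1 = ga*(a0*x1 - a1*x0) + (a0*E3a + a1*E3b) by rewrite /E3a /E3b /ra /rb /F1; ring. kill; ring. Qed.
Lemma U1' a0 a1 : F1 x0 x1 a0 a1 = de*(a0*z1 - a1*z0).
Proof. have -> : F1 x0 x1 a0 a1 = de*(a0*z1 - a1*z0) + (a0*E4a + a1*E4b) by rewrite /E4a /E4b /ra /rb /F1; ring. kill; ring. Qed.
Lemma U2 a0 a1 : F2 a0 a1 y0 y1 = ep*(a0*x1 - a1*x0).
Proof. have -> : F2 a0 a1 y0 y1 = ep*(a0*x1 - a1*x0) + (a0*E5a + a1*E5b) by rewrite /E5a /E5b /ra /rb /F2; ring. kill; ring. Qed.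
Lemma U2' a0 a1 : F2 x0 x1 a0 a1 = ze*(a0*y1 - a1*y0).
Proof. have -> : F2 x0 x1 a0 a1 = ze*(a0*y1 - a1*y0) + (a0*E6a + a1*E6b) by rewrite /E6a /E6b /ra /rb /F2; ring. kill; ring. Qed.
End WithRels.
Arguments G0z {x0 x1 y0 y1 z0 z1 al be ga de ep ze}.
Arguments G1z {x0 x1 y0 y1 z0 z1 al be ga de ep ze}.
Arguments Qz {x0 x1 y0 y1 z0 z1 al be ga de ep ze}.
Arguments U0 {x0 x1 y0 y1 z0 z1 al be ga de ep ze}.
Arguments U0' {x0 x1 y0 y1 z0 z1 al be ga de ep ze}.
Arguments U1 {x0 x1 y0 y1 z0 z1 al be ga de ep ze}.
Arguments U1' {x0 x1 y0 y1 z0 z1 al be ga de ep ze}.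
Arguments U2 {x0 x1 y0 y1 z0 z1 al be ga de ep ze}.
Arguments U2' {x0 x1 y0 y1 z0 z1 al be ga de ep ze}.

Definition zsc x0 x1 y0 y1 z0 z1 := [/\ nz x0 x1, nz y0 y1, nz z0 z1 &
  [/\ F0 y0 y1 z0 z1 = 0, F1 x0 x1 z0 z1 = 0 & F2 x0 x1 y0 y1 = 0]].

Lemma rels_ex x0 x1 y0 y1 z0 z1 : zsc x0 x1 y0 y1 z0 z1 ->
  exists al be ga de ep ze, Rels x0 x1 y0 y1 z0 z1 al be ga de ep ze.
Proof.
case=> nx ny nzz [e0 e1 e2].
have [al [a1 a2]] := @perp _ y0 y1 (V 0*z0 + V 1*z1) (V 2*z0 + V 3*z1) ny
  ltac:(rewrite -e0 /F0; ring).
have [be [b1 b2]] := @perp _ z0 z1 (V 0*y0 + V 2*y1) (V 1*y0 + V 3*y1) nzz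
  ltac:(rewrite -e0 /F0; ring).
have [ga [c1 c2]] := @perp _ x0 x1 (V 4*z0 + V 5*z1) (V 6*z0 + V 7*z1) nx
  ltac:(rewrite -e1 /F1; ring).
have [de [d1 d2]] := @perp _ z0 z1 (V 4*x0 + V 6*x1) (V 5*x0 + V 7*x1) nzz
  ltac:(rewrite -e1 /F1; ring).
have [ep [f1 f2]] := @perp _ x0 x1 (V 8*y0 + V 9*y1) (V 10*y0 + V 11*y1) nx
  ltac:(rewrite -e2 /F2; ring).
have [ze [h1 h2]] := @perp _ y0 y1 (V 8*x0 + V 10*x1) (V 9*x0 + V 11*x1) ny
  ltac:(rewrite -e2 /F2; ring).
by exists al, be, ga, de, ep, ze; split.
Qed.

Lemma K_nz x0 x1 y0 y1 z0 z1 al be ga de ep ze :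
  Rels x0 x1 y0 y1 z0 z1 al be ga de ep ze -> nz z0 z1 -> Dform v != 0 ->
  KK al be ga de ep ze != 0.
Proof.
move=> HR nzz hD; apply/eqP => hK.
have g0e : g0 z0 z1 = 0 by rewrite -(G0z HR) hK mul0r addr0.
have g1e : g1 z0 z1 = 0 by rewrite -(G1z HR) hK mul0r subr0.
have d0 : Dform v * z0 = 0 by rewrite (Dg0 z0 z1) g0e g1e; ring.
have d1 : Dform v * z1 = 0 by rewrite (Dg1 z0 z1) g0e g1e; ring.
by move/eqP: hD; apply; exact: (@nz_par C _ _ _ d0 d1 nzz).
Qed.

Lemma cramer (al be ga de ep ze Wx Wy Wz : C) : al*de*ep + be*ga*ze != 0 ->
  al*Wy + be*Wz = 0 -> ga*Wx + de*Wz = 0 -> ep*Wx + ze*Wy = 0 ->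
  [/\ Wx = 0, Wy = 0 & Wz = 0].
Proof.
move=> hK e1 e2 e3; set K := _ + _ in hK.
have ex : K * Wx = al*de*(ep*Wx + ze*Wy) + be*ze*(ga*Wx + de*Wz) - de*ze*(al*Wy + be*Wz) by rewrite /K; ring.
have ey : K * Wy = de*ep*(al*Wy + be*Wz) + be*ga*(ep*Wx + ze*Wy) - be*ep*(ga*Wx + de*Wz) by rewrite /K; ring.
have ez : K * Wz = al*ep*(ga*Wx + de*Wz) + ga*ze*(al*Wy + be*Wz) - al*ga*(ep*Wx + ze*Wy) by rewrite /K; ring.
rewrite e1 e2 e3 !mulr0 !subr0 addr0 in ex ey ez.
split; apply/eqP.
- by move/eqP: ex; rewrite mulf_eq0 (negbTE hK).
- by move/eqP: ey; rewrite mulf_eq0 (negbTE hK).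
- by move/eqP: ez; rewrite mulf_eq0 (negbTE hK).
Qed.

Lemma ker3 (al be ga de ep ze : C) : al*de*ep + be*ga*ze = 0 ->
  exists Wx Wy Wz, [/\ [|| Wx != 0, Wy != 0 | Wz != 0],
    al*Wy + be*Wz = 0, ga*Wx + de*Wz = 0 & ep*Wx + ze*Wy = 0].
Proof.
move=> hK.
have [a0|a0] := eqVneq al 0.
  have [z0|z0] := eqVneq ze 0.
    exists 0, 1, 0; rewrite a0 z0 oner_eq0 orbT; split => //; ring.
  have [g0|g0] := eqVneq ga 0.
    exists ze, (-ep), 0; rewrite z0 a0 g0; split => //; ring.
  have b0 : be = 0.
    move: hK; rewrite a0 !mul0r add0r => /eqP; rewrite !mulf_eq0 (negbTE g0) (negbTE z0) !orbF.
    by move/eqP.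
  exists (de*ze), (-(ep*de)), (-(ga*ze)); rewrite a0 b0; split; try ring.
  by apply/orP; right; apply/orP; right; rewrite oppr_eq0 mulf_neq0.
have [g0|g0] := eqVneq ga 0.
  have [e0|e0] := eqVneq ep 0.
    exists 1, 0, 0; rewrite g0 e0 oner_eq0; split => //; ring.
  have d0 : de = 0.
    move: hK; rewrite g0 !mulr0 mul0r addr0 => /eqP; rewrite !mulf_eq0 (negbTE a0) (negbTE e0) !orbF.
    by move/eqP.
  exists (be*ze), (-(be*ep)), (al*ep); rewrite g0 d0; split; try ring.
  by apply/orP; right; apply/orP; right; rewrite mulf_neq0.
exists (al*de), (be*ga), (-(al*ga)); split.
- by apply/orP; right; apply/orP; right; rewrite oppr_eq0 mulf_neq0.
- ring.
- ring.
- by rewrite -hK; ring.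
Qed.

Arguments cramer {al be ga de ep ze Wx Wy Wz}.
Arguments ker3 {al be ga de ep ze}.

Section Sc.
Variables x0 x1 y0 y1 z0 z1 al be ga de ep ze : C.
Hypothesis HR : Rels x0 x1 y0 y1 z0 z1 al be ga de ep ze.

Lemma red_sc : KK al be ga de ep ze != 0 ->
  forall ux0 ux1 uy0 uy1 uz0 uz1 : C,
  F0 uy0 uy1 z0 z1 + F0 y0 y1 uz0 uz1 = 0 ->
  F1 ux0 ux1 z0 z1 + F1 x0 x1 uz0 uz1 = 0 ->
  F2 ux0 ux1 y0 y1 + F2 x0 x1 uy0 uy1 = 0 ->
  [/\ ux0*x1 - ux1*x0 = 0, uy0*y1 - uy1*y0 = 0 & uz0*z1 - uz1*z0 = 0].
Proof.
move=> hK ux0 ux1 uy0 uy1 uz0 uz1.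
rewrite (U0 HR) (U0' HR) (U1 HR) (U1' HR) (U2 HR) (U2' HR) => e1 e2 e3.
rewrite /KK in hK; exact: (cramer hK e1 e2 e3).
Qed.

Lemma nonred_sc : KK al be ga de ep ze = 0 -> nz x0 x1 -> nz y0 y1 -> nz z0 z1 ->
  exists ux0 ux1 uy0 uy1 uz0 uz1 : C, [/\
  F0 uy0 uy1 z0 z1 + F0 y0 y1 uz0 uz1 = 0,
  F1 ux0 ux1 z0 z1 + F1 x0 x1 uz0 uz1 = 0,
  F2 ux0 ux1 y0 y1 + F2 x0 x1 uy0 uy1 = 0 &
  [|| ux0*x1 - ux1*x0 != 0, uy0*y1 - uy1*y0 != 0 | uz0*z1 - uz1*z0 != 0]].
Proof.
move=> hK nx ny nzz.
have [Wx [Wy [Wz [hW e1 e2 e3]]]] := ker3 hK.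
have [ex0 [ex1 hx]] := e_ex nx.
have [ey0 [ey1 hy]] := e_ex ny.
have [ez0 [ez1 hz]] := e_ex nzz.
have dx : Wx*ex0*x1 - Wx*ex1*x0 = Wx by rewrite -[RHS]mulr1 -hx; ring.
have dy : Wy*ey0*y1 - Wy*ey1*y0 = Wy by rewrite -[RHS]mulr1 -hy; ring.
have dz : Wz*ez0*z1 - Wz*ez1*z0 = Wz by rewrite -[RHS]mulr1 -hz; ring.
exists (Wx*ex0), (Wx*ex1), (Wy*ey0), (Wy*ey1), (Wz*ez0), (Wz*ez1).
rewrite (U0 HR) (U0' HR) (U1 HR) (U1' HR) (U2 HR) (U2' HR) dx dy dz.
by split.
Qed.

Lemma uniq_sc x'0 x'1 y'0 y'1 z'0 z'1 : KK al be ga de ep ze != 0 ->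
  nz x0 x1 -> nz y0 y1 -> nz z0 z1 -> zsc x'0 x'1 y'0 y'1 z'0 z'1 ->
  z'0*z1 - z'1*z0 = 0 ->
  exists cx cy cz : C, [/\ cx != 0, cy != 0, cz != 0 &
   [/\ x'0 = cx*x0, x'1 = cx*x1, y'0 = cy*y0, y'1 = cy*y1 & z'0 = cz*z0 /\ z'1 = cz*z1]].
Proof.
move=> hK nx ny nzz [nx' ny' nz' [f0 f1 f2]] dz.
have [cz [ez0 ez1]] := par nzz dz.
have cz0 := par_nz nz' ez0 ez1.
have f0' : F0 y'0 y'1 z0 z1 = 0.
  have : cz * F0 y'0 y'1 z0 z1 = 0 by rewrite -f0 ez0 ez1 /F0; ring.
  by move/eqP; rewrite mulf_eq0 (negbTE cz0) => /eqP.
have f1' : F1 x'0 x'1 z0 z1 = 0.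
  have : cz * F1 x'0 x'1 z0 z1 = 0 by rewrite -f1 ez0 ez1 /F1; ring.
  by move/eqP; rewrite mulf_eq0 (negbTE cz0) => /eqP.
have hc : (al*ep != 0) || (ga*ze != 0).
  apply: contraNT hK; rewrite negb_or !negbK => /andP[/eqP h1 /eqP h2].
  apply/eqP; have -> : KK al be ga de ep ze = de*(al*ep) + be*(ga*ze) by rewrite /KK; ring.
  by rewrite h1 h2 !mulr0 addr0.
case/orP: hc; rewrite mulf_eq0 negb_or => /andP[h1 h2].
- have : al * (y'0*y1 - y'1*y0) = 0 by rewrite -(U0 HR) f0'.
  move/eqP; rewrite mulf_eq0 (negbTE h1) /= => /eqP /(par ny) [cy [ey0 ey1]].
  have cy0 := par_nz ny' ey0 ey1.
  have f2' : F2 x'0 x'1 y0 y1 = 0.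
    have : cy * F2 x'0 x'1 y0 y1 = 0 by rewrite -f2 ey0 ey1 /F2; ring.
    by move/eqP; rewrite mulf_eq0 (negbTE cy0) => /eqP.
  have : ep * (x'0*x1 - x'1*x0) = 0 by rewrite -(U2 HR) f2'.
  move/eqP; rewrite mulf_eq0 (negbTE h2) /= => /eqP /(par nx) [cx [ex0 ex1]].
  have cx0 := par_nz nx' ex0 ex1.
  by exists cx, cy, cz.
- have : ga * (x'0*x1 - x'1*x0) = 0 by rewrite -(U1 HR) f1'.
  move/eqP; rewrite mulf_eq0 (negbTE h1) /= => /eqP /(par nx) [cx [ex0 ex1]].
  have cx0 := par_nz nx' ex0 ex1.
  have f2' : F2 x0 x1 y'0 y'1 = 0.
    have : cx * F2 x0 x1 y'0 y'1 = 0 by rewrite -f2 ex0 ex1 /F2; ring.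
    by move/eqP; rewrite mulf_eq0 (negbTE cx0) => /eqP.
  have : ze * (y'0*y1 - y'1*y0) = 0 by rewrite -(U2' HR) f2'.
  move/eqP; rewrite mulf_eq0 (negbTE h2) /= => /eqP /(par ny) [cy [ey0 ey1]].
  have cy0 := par_nz ny' ey0 ey1.
  by exists cx, cy, cz.
Qed.
End Sc.

Lemma three_sc (z0 z1 w0 w1 t0 t1 : C) : qq z0 z1 = 0 -> qq w0 w1 = 0 -> qq t0 t1 = 0 ->
  z0*w1 - z1*w0 != 0 -> z0*t1 - z1*t0 != 0 -> w0*t1 - w1*t0 != 0 -> Dform v = 0.
Proof.
move=> hz hw ht d1 d2 d3.
case: (three_id z0 z1 w0 w1 t0 t1) => /=; rewrite hz hw ht ?mulr0 ?addr0 ?subr0 ?oppr0 ?addr0 ?mulr0 ?addr0.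
move=> e0 e1 e2.
have hA : (z0*w1 - z1*w0) * (z0*t1 - z1*t0) * (w0*t1 - w1*t0) != 0 by rewrite !mulf_neq0.
have k0z : k0 = 0 by move/eqP: e0; rewrite mulf_eq0 (negbTE hA) => /eqP.
have k1z : k1 = 0 by move/eqP: e1; rewrite mulf_eq0 (negbTE hA) => /eqP.
have k2z : k2 = 0 by move/eqP: e2; rewrite mulf_eq0 (negbTE hA) => /eqP.
by rewrite /Dform k0z k1z k2z; ring.
Qed.

Lemma fiber_sc (z0 z1 : C) : nz z0 z1 -> qq z0 z1 = 0 ->
  exists x0 x1 y0 y1, zsc x0 x1 y0 y1 z0 z1.
Proof.
move=> nzz hq.
have [hP|hP] := boolP (nz (V 0*z0+V 1*z1) (V 2*z0+V 3*z1)).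
  have ny : nz (-(V 2*z0+V 3*z1)) (V 0*z0+V 1*z1) by move: hP; rewrite /nz oppr_eq0 orbC.
  have [hQ|hQ] := boolP (nz (V 4*z0+V 5*z1) (V 6*z0+V 7*z1)).
    have nx : nz (-(V 6*z0+V 7*z1)) (V 4*z0+V 5*z1) by move: hQ; rewrite /nz oppr_eq0 orbC.
    exists (-(V 6*z0+V 7*z1)), (V 4*z0+V 5*z1), (-(V 2*z0+V 3*z1)), (V 0*z0+V 1*z1).
    split => //; split; [rewrite /F0; ring | rewrite /F1; ring | by rewrite -qqM].
  move: hQ; rewrite /nz negb_or !negbK => /andP[/eqP q0 /eqP q1].
  have [a0 [a1 [na ha]]] := perp2 (V 8*(-(V 2*z0+V 3*z1)) + V 9*(V 0*z0+V 1*z1))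
     (V 10*(-(V 2*z0+V 3*z1)) + V 11*(V 0*z0+V 1*z1)).
  exists a0, a1, (-(V 2*z0+V 3*z1)), (V 0*z0+V 1*z1); split => //; split.
  - rewrite /F0; ring.
  - have -> : F1 a0 a1 z0 z1 = a0 * (V 4*z0+V 5*z1) + a1 * (V 6*z0+V 7*z1) by rewrite /F1; ring.
    by rewrite q0 q1; ring.
  - by rewrite -ha /F2; ring.
move: hP; rewrite /nz negb_or !negbK => /andP[/eqP p0 /eqP p1].
have [a0 [a1 [na ha]]] := perp2 (V 4*z0+V 5*z1) (V 6*z0+V 7*z1).
have [b0 [b1 [nb hb]]] := perp2 (V 8*a0+V 10*a1) (V 9*a0+V 11*a1).
exists a0, a1, b0, b1; split => //; split.
- have -> : F0 b0 b1 z0 z1 = b0 * (V 0*z0+V 1*z1) + b1 * (V 2*z0+V 3*z1) by rewrite /F0; ring.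
  by rewrite p0 p1; ring.
- by rewrite -ha /F1; ring.
- by rewrite -hb /F2; ring.
Qed.

Lemma root_sc : exists z0 z1 : C, nz z0 z1 /\ qq z0 z1 = 0.
Proof.
have [h|h] := eqVneq k0 0.
  by exists 1, 0; rewrite /nz oner_eq0 /qq h; split => //; ring.
pose s := sqrtC (Dform v).
have hs : s ^+ 2 = Dform v by rewrite sqrtCK.
have h2 : (2%:R : C) != 0 by rewrite pnatr_eq0.
exists ((- k1 + s) / (2%:R * k0)), 1; split; first by rewrite /nz oner_eq0 orbT.
rewrite /qq (_ : _ + _ = (s ^+ 2 - Dform v) / (4%:R * k0)).
  by rewrite hs subrr mul0r.
rewrite /Dform; field.
exact: h.
Qed.

Lemma ker2_sc : Dform v = 0 -> exists z0 z1 : C, [/\ nz z0 z1, g0 z0 z1 = 0 & g1 z0 z1 = 0].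
Proof.
move=> hD.
have [h1|h1] := eqVneq k1 0; last first.
  exists k1, (- (2%:R * k0)); split; first by rewrite /nz h1.
  - rewrite /g0; ring.
  - by rewrite -hD /g1 /Dform; ring.
have : 4%:R * (k0 * k2) = 0 by rewrite -oppr0 -hD /Dform h1; ring.
move/eqP; rewrite mulf_eq0 pnatr_eq0 /= mulf_eq0 => /orP[/eqP h0|/eqP h2].
  by exists 1, 0; rewrite /nz oner_eq0 /g0 /g1 h0 h1; split => //; ring.
by exists 0, 1; rewrite /nz oner_eq0 orbT /g0 /g1 h2 h1; split => //; ring.
Qed.
End Core.

Section Glue.
Variable C : numClosedFieldType.
Variable v : 'I_12 -> C.

Lemma ord2E (a : 'I_2) : a = inord 0 \/ a = inord 1.
Proof. case: a => [[|[|//]] H]; [left|right]; apply: val_inj; by rewrite /= inordK. Qed.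

Lemma ord3E (a : 'I_3) : [\/ a = inord 0, a = inord 1 | a = inord 2].
Proof. case: a => [[|[|[|//]]] H]; [apply: Or31|apply: Or32|apply: Or33]; apply: val_inj; by rewrite /= inordK. Qed.

Lemma big2E (F : 'I_2 -> C) : \sum_(a < 2) F a = F (inord 0) + F (inord 1).
Proof.
rewrite big_ord_recl big_ord_recl big_ord0 addr0; congr (F _ + F _); apply: val_inj => //=; by rewrite inordK.
Qed.

Lemma vidxE (i : nat) (a b : nat) : (i < 3)%N -> (a < 2)%N -> (b < 2)%N ->
  vidx (inord i) (inord a) (inord b) = inord (4 * i + 2 * a + b).
Proof. by move=> hi ha hb; rewrite /vidx !inordK. Qed.

Lemma bilE i x y : (i < 3)%N -> bil v (inord i) x y =
  v (inord (4*i)) * x (inord 0) * y (inord 0) + v (inord (4*i+1)) * x (inord 0) * y (inord 1)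
  + (v (inord (4*i+2)) * x (inord 1) * y (inord 0) + v (inord (4*i+3)) * x (inord 1) * y (inord 1)).
Proof.
move=> hi; rewrite /bil big2E !big2E !vidxE //.
by rewrite !muln0 !addn0 muln1 -addnA.
Qed.

Lemma oth10 : oth1 (inord 0) = inord 1. Proof. by rewrite /oth1 /= inordK. Qed.
Lemma oth11 : oth1 (inord 1) = inord 0. Proof. by rewrite /oth1 /= inordK. Qed.
Lemma oth12 : oth1 (inord 2) = inord 0. Proof. by rewrite /oth1 /= inordK. Qed.
Lemma oth20 : oth2 (inord 0) = inord 2. Proof. by rewrite /oth2 /= inordK. Qed.
Lemma oth21 : oth2 (inord 1) = inord 2. Proof. by rewrite /oth2 /= inordK. Qed.
Lemma oth22 : oth2 (inord 2) = inord 1. Proof. by rewrite /oth2 /= inordK. Qed.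

Definition pc (p : Pt C) (l a : nat) := p (inord l) (inord a).

Lemma fsec0E p : fsec v (inord 0) p = F0 v (pc p 1 0) (pc p 1 1) (pc p 2 0) (pc p 2 1).
Proof. by rewrite /fsec oth10 oth20 bilE. Qed.
Lemma fsec1E p : fsec v (inord 1) p = F1 v (pc p 0 0) (pc p 0 1) (pc p 2 0) (pc p 2 1).
Proof. by rewrite /fsec oth11 oth21 bilE. Qed.
Lemma fsec2E p : fsec v (inord 2) p = F2 v (pc p 0 0) (pc p 0 1) (pc p 1 0) (pc p 1 1).
Proof. by rewrite /fsec oth12 oth22 bilE. Qed.

Lemma dfsec0E p u : dfsec v (inord 0) p u =
  F0 v (pc u 1 0) (pc u 1 1) (pc p 2 0) (pc p 2 1) + F0 v (pc p 1 0) (pc p 1 1) (pc u 2 0) (pc u 2 1).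
Proof. by rewrite /dfsec oth10 oth20 !bilE. Qed.
Lemma dfsec1E p u : dfsec v (inord 1) p u =
  F1 v (pc u 0 0) (pc u 0 1) (pc p 2 0) (pc p 2 1) + F1 v (pc p 0 0) (pc p 0 1) (pc u 2 0) (pc u 2 1).
Proof. by rewrite /dfsec oth11 oth21 !bilE. Qed.
Lemma dfsec2E p u : dfsec v (inord 2) p u =
  F2 v (pc u 0 0) (pc u 0 1) (pc p 1 0) (pc p 1 1) + F2 v (pc p 0 0) (pc p 0 1) (pc u 1 0) (pc u 1 1).
Proof. by rewrite /dfsec oth12 oth22 !bilE. Qed.

Lemma nzE (p : Pt C) l : (exists a, p l a != 0) <-> nz (p l (inord 0)) (p l (inord 1)).
Proof.
split.
- by case=> a; case: (ord2E a) => -> h; rewrite /nz h ?orbT.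
- by case/orP => h; eexists; exact: h.
Qed.

Definition zscP (p : Pt C) := zsc v (pc p 0 0) (pc p 0 1) (pc p 1 0) (pc p 1 1) (pc p 2 0) (pc p 2 1).

Lemma is_zeroE p : is_zero v p <-> zscP p.
Proof.
split.
- case=> hn hf; split; rewrite /pc -?nzE //.
  by split; rewrite -?fsec0E -?fsec1E -?fsec2E.
- case=> n0 n1 n2 [f0 f1 f2]; split.
  + by move=> l; apply/nzE; case: (ord3E l) => ->.
  + by move=> i; case: (ord3E i) => ->; rewrite ?fsec0E ?fsec1E ?fsec2E.
Qed.

Definition mkPt (x0 x1 y0 y1 z0 z1 : C) : Pt C := fun l a =>
  if val l == 0%N then (if val a == 0%N then x0 else x1)
  else if val l == 1%N then (if val a == 0%N then y0 else y1)
  else (if val a == 0%N then z0 else z1).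

Lemma mkPtE x0 x1 y0 y1 z0 z1 :
  let p := mkPt x0 x1 y0 y1 z0 z1 in
  [/\ pc p 0 0 = x0, pc p 0 1 = x1, pc p 1 0 = y0, pc p 1 1 = y1 & (pc p 2 0 = z0 /\ pc p 2 1 = z1)].
Proof. by rewrite /pc /mkPt /= !inordK. Qed.

End Glue.

Section Main.
Variable C : numClosedFieldType.
Variable v : 'I_12 -> C.

Lemma zsc_mk x0 x1 y0 y1 z0 z1 : zsc v x0 x1 y0 y1 z0 z1 -> is_zero v (mkPt x0 x1 y0 y1 z0 z1).
Proof.
move=> h; apply/is_zeroE; rewrite /zscP.
by have [-> -> -> -> [-> ->]] := mkPtE x0 x1 y0 y1 z0 z1.
Qed.

Lemma red_of p : is_zero v p -> Dform v != 0 -> reduced_at v p.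
Proof.
move=> /is_zeroE hz hD u hu l.
have [al [be [ga [de [ep [ze HR]]]]]] := rels_ex hz.
case: hz => nx ny nzz _.
have hK := K_nz HR nzz hD.
have e0 := hu (inord 0); have e1 := hu (inord 1); have e2 := hu (inord 2).
rewrite dfsec0E in e0; rewrite dfsec1E in e1; rewrite dfsec2E in e2.
have [dx dy dz] := red_sc HR hK e0 e1 e2.
case: (ord3E l) => ->.
- have [c [c0 c1]] := par nx dx; exists c => a; case: (ord2E a) => ->; [exact: c0 | exact: c1].
- have [c [c0 c1]] := par ny dy; exists c => a; case: (ord2E a) => ->; [exact: c0 | exact: c1].
- have [c [c0 c1]] := par nzz dz; exists c => a; case: (ord2E a) => ->; [exact: c0 | exact: c1].
Qed.

Lemma uniq_of p q : is_zero v p -> is_zero v q -> Dform v != 0 ->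
  pc q 2 0 * pc p 2 1 - pc q 2 1 * pc p 2 0 = 0 -> proj_eq p q.
Proof.
move=> /is_zeroE hp /is_zeroE hq hD hd.
have [al [be [ga [de [ep [ze HR]]]]]] := rels_ex hp.
case: hp => nx ny nzz _.
have hK := K_nz HR nzz hD.
have [cx [cy [cz [hx hy hz [ex0 ex1 ey0 ey1 [ez0 ez1]]]]]] := uniq_sc HR hK nx ny nzz hq hd.
move=> l; case: (ord3E l) => ->.
- by exists cx; split => // a; case: (ord2E a) => ->.
- by exists cy; split => // a; case: (ord2E a) => ->.
- by exists cz; split => // a; case: (ord2E a) => ->.
Qed.

Lemma qq_of p : is_zero v p -> qq v (pc p 2 0) (pc p 2 1) = 0.
Proof.
move=> /is_zeroE hp.
have [al [be [ga [de [ep [ze HR]]]]]] := rels_ex hp.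
by case: hp => _ _ _ [_ _ f2]; exact: (Qz HR f2).
Qed.

Lemma three_of p1 p2 p3 : is_zero v p1 -> is_zero v p2 -> is_zero v p3 -> Dform v != 0 ->
  ~ proj_eq p1 p2 -> ~ proj_eq p1 p3 -> ~ proj_eq p2 p3 -> False.
Proof.
move=> h1 h2 h3 hD n12 n13 n23.
have dd : forall p q, is_zero v p -> is_zero v q -> ~ proj_eq p q ->
    pc p 2 0 * pc q 2 1 - pc p 2 1 * pc q 2 0 != 0.
  move=> p q hp hq npq; apply/eqP => e; apply: npq; apply: uniq_of => //.
  by rewrite -oppr0 -e; ring.
move/eqP: hD; apply.
exact: (three_sc (qq_of h1) (qq_of h2) (qq_of h3) (dd _ _ h1 h2 n12) (dd _ _ h1 h3 n13) (dd _ _ h2 h3 n23)).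
Qed.

Lemma zdr_of : Dform v != 0 -> zero_dim_reduced v.
Proof.
move=> hD.
have [p1 h1] : exists p, is_zero v p.
  have [z0 [z1 [nzz hq]]] := root_sc v.
  have [x0 [x1 [y0 [y1 hz]]]] := fiber_sc nzz hq.
  by exists (mkPt x0 x1 y0 y1 z0 z1); apply: zsc_mk.
split.
- by exists p1.
- case: (classic (exists p2, is_zero v p2 /\ ~ proj_eq p1 p2)) => [[p2 [h2 n12]]|hn].
    exists 2%N, (fun k => if val k == 0%N then p1 else p2) => p hp.
    case: (classic (proj_eq p1 p)) => [e1|n1]; first by exists (inord 0); rewrite /= inordK.
    case: (classic (proj_eq p2 p)) => [e2|n2]; first by exists (inord 1); rewrite /= inordK.
    by case: (three_of h1 h2 hp hD n12 n1 n2).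
  exists 1%N, (fun _ => p1) => p hp; exists ord0.
  by apply: NNPP => np; apply: hn; exists p.
- by move=> p hp; apply: red_of.
Qed.

Lemma not_zdr : Dform v = 0 -> ~ zero_dim_reduced v.
Proof.
move=> hD [_ _ hred].
have [z0 [z1 [nzz hg0 hg1]]] := ker2_sc hD.
have hq : qq v z0 z1 = 0.
  have : 2%:R * qq v z0 z1 = 0 by rewrite -euler hg0 hg1; ring.
  by move/eqP; rewrite mulf_eq0 pnatr_eq0 /= => /eqP.
have [x0 [x1 [y0 [y1 hz]]]] := fiber_sc nzz hq.
have [al [be [ga [de [ep [ze HR]]]]]] := rels_ex hz.
case: (hz) => nx ny _ _.
have hK : KK al be ga de ep ze = 0.
  have a0 : KK al be ga de ep ze * z0 = 0.
    by rewrite -oppr0 -(G1z HR) hg1; ring.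
  have a1 : KK al be ga de ep ze * z1 = 0.
    by rewrite -(G0z HR) hg0; ring.
  exact: (nz_par a0 a1 nzz).
have [ux0 [ux1 [uy0 [uy1 [uz0 [uz1 [e0 e1 e2 hW]]]]]]] := nonred_sc HR hK nx ny nzz.
pose p := mkPt x0 x1 y0 y1 z0 z1.
pose u := mkPt ux0 ux1 uy0 uy1 uz0 uz1.
have hp : is_zero v p by apply: zsc_mk.
have [px0 px1 py0 py1 [pz0 pz1]] := mkPtE x0 x1 y0 y1 z0 z1.
have [qx0 qx1 qy0 qy1 [qz0 qz1]] := mkPtE ux0 ux1 uy0 uy1 uz0 uz1.
have hu : forall i, dfsec v i p u = 0.
  move=> i; case: (ord3E i) => ->.
  - by rewrite dfsec0E /p /u py0 py1 pz0 pz1 qy0 qy1 qz0 qz1.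
  - by rewrite dfsec1E /p /u px0 px1 pz0 pz1 qx0 qx1 qz0 qz1.
  - by rewrite dfsec2E /p /u px0 px1 py0 py1 qx0 qx1 qy0 qy1.
have hr := hred p hp u hu.
have det0 : forall l, pc u l 0 * pc p l 1 - pc u l 1 * pc p l 0 = 0.
  move=> l; have [c hc] := hr (inord l); rewrite /pc !hc; ring.
move: hW => /or3P [] /eqP []; [move: (det0 0%N) | move: (det0 1%N) | move: (det0 2%N)];
  rewrite /p /u ?px0 ?px1 ?py0 ?py1 ?pz0 ?pz1 ?qx0 ?qx1 ?qy0 ?qy1 ?qz0 ?qz1 //.
Qed.

Lemma disc_iff : in_discriminant v <-> Dform v = 0.
Proof.
split.
- move=> hn; apply: NNPP => hD; apply: hn; apply: zdr_of; exact/eqP.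
- by move=> hD; apply: not_zdr.
Qed.
End Main.

Definition blk (k : nat) (i : 'I_12) : bool := (4 * k <= i < 4 * k + 4)%N.
Definition mB (k : nat) (m : 'X_{1..12}) : nat := (\sum_(i < 12 | blk k i) m i)%N.
Lemma mB0 k : mB k 0%MM = 0%N.
Proof. by rewrite /mB big1 // => i _; rewrite mnm0E. Qed.
Lemma mBD k : {morph mB k : m1 m2 / (m1 + m2)%MM >-> (m1 + m2)%N}.
Proof. by move=> m1 m2; rewrite /mB -big_split /=; apply: eq_bigr => i _; rewrite mnmDE. Qed.
HB.instance Definition _ k := isMeasure.Build 12 (mB k) (mB0 k) (mBD k).
Definition mBm (k : nat) : measure 12 := Measure.clone 12 (mB k) _.

Lemma mBU k (i : 'I_12) : mB k U_(i) = blk k i.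
Proof.
rewrite /mB big_mkcond (bigD1 i) //= mnm1E eqxx big1 ?addn0; first by case: ifP.
by move=> j hj; rewrite mnm1E (eq_sym i) (negbTE hj); case: ifP.
Qed.

Section PolyD.
Variable C : numClosedFieldType.
Definition XX : 'I_12 -> {mpoly C[12]} := fun i => 'X_i.
Definition Dpoly : {mpoly C[12]} := Dform XX.

Lemma Dpoly_eval (v : 'I_12 -> C) : Dpoly.@[v] = Dform v.
Proof.
rewrite /Dpoly /Dform /kk0 /kk1 /kk2 /XX.
by rewrite !expr2 !(mevalB, mevalD, mevalM, mevalMn, meval1, mevalXU).
Qed.

Lemma homog_eq (mf : measure 12) (p : {mpoly C[12]}) d e :
  p \is d.-homog for mf -> d = e -> p \is e.-homog for mf.
Proof. by move=> h <-. Qed.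

Lemma kk_homog (mf : measure 12) a b c :
  (forall i : nat, (i < 4)%N -> mf U_(inord i)%MM = a) ->
  (forall i : nat, (4 <= i < 8)%N -> mf U_(inord i)%MM = b) ->
  (forall i : nat, (8 <= i < 12)%N -> mf U_(inord i)%MM = c) ->
  [/\ kk0 XX \is (a + b + c).-homog for mf, kk1 XX \is (a + b + c).-homog for mf
    & kk2 XX \is (a + b + c).-homog for mf].
Proof.
move=> ha hb hc.
have hX : forall i : nat, (i < 12)%N -> ('X_(inord i) : {mpoly C[12]}) \is (mf U_(inord i)%MM).-homog for mf.
  by move=> i _; rewrite dhomogX.
have t : forall i j k : nat, (i < 4)%N -> (4 <= j < 8)%N -> (8 <= k < 12)%N ->
    XX (inord i) * XX (inord j) * XX (inord k) \is (a + b + c).-homog for mf.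
  move=> i j k hi hj hk; apply: dhomogM; first apply: dhomogM.
  - by rewrite -(ha i hi); apply: hX; apply: leq_trans hi _.
  - by rewrite -(hb j hj); apply: hX; case/andP: hj => _ h; apply: leq_trans h _.
  - by rewrite -(hc k hk); apply: hX; case/andP: hk.
by split; rewrite /kk0 /kk1 /kk2; repeat (apply: rpredB || apply: rpredD); apply: t.
Qed.

Lemma D_homog (mf : measure 12) a b c :
  (forall i : nat, (i < 4)%N -> mf U_(inord i)%MM = a) ->
  (forall i : nat, (4 <= i < 8)%N -> mf U_(inord i)%MM = b) ->
  (forall i : nat, (8 <= i < 12)%N -> mf U_(inord i)%MM = c) ->
  Dpoly \is ((a + b + c) * 2).-homog for mf.
Proof.
move=> ha hb hc; have [h0 h1 h2] := kk_homog ha hb hc.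
rewrite /Dpoly /Dform; apply: rpredB; first exact: dhomogMn.
rewrite -mulrA mulr_natl; apply: rpredMn.
by apply: homog_eq; [apply: dhomogM; [exact: h0 | exact: h2] | rewrite muln2 addnn].
Qed.
End PolyD.

Section Top.
Variables (n : nat) (R : idomainType) (mf : measure n).
Local Notation msz p := (mmeasure mf p).
Implicit Types (p f g : {mpoly R[n]}).

Definition top p := pihomog mf (msz p).-1 p.

Lemma homog_msz d p : p \is d.-homog for mf -> (msz p <= d.+1)%N.
Proof.
move=> h; rewrite mmeasureE; apply/bigmax_leqP_seq => m hm _.
by rewrite (dhomog_mf h hm).
Qed.

Lemma top_homog p : top p \is (msz p).-1.-homog for mf.
Proof. exact: pihomogP. Qed.

Lemma top_keep (mf2 : measure n) e p : p \is e.-homog for mf2 -> top p \is e.-homog for mf2.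
Proof.
move=> h; rewrite /top pihomogE big_seq_cond; apply: rpred_sum => m /andP[hm _].
by apply: rpredZ; rewrite dhomogX (dhomog_mf h hm).
Qed.

Lemma top_nz p : p != 0 -> top p != 0.
Proof.
move=> hp; apply/eqP => ht.
have hK := mpolySpred mf hp; set K := (msz p).-1 in hK ht.
have e : p = \sum_(d < K.+1) pihomog mf d p by apply: pihomog_partitionE; rewrite hK.
rewrite big_ord_recr /= [pihomog mf K p]ht addr0 in e.
have : (msz p <= K)%N.
  rewrite {1}e; apply: leq_trans (mmeasure_sum mf _ _ _) _.
  apply/bigmax_leqP => i _; apply: leq_trans (homog_msz (pihomogP _ _ _)) _.
  by have := ltn_ord i.
by rewrite hK ltnn.
Qed.

Lemma pihomog_mul f g a b : (msz f <= a.+1)%N -> (msz g <= b.+1)%N ->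
  pihomog mf (a + b) (f * g) = pihomog mf a f * pihomog mf b g.
Proof.
move=> hf hg.
rewrite {1}(pihomog_partitionE hf) {1}(pihomog_partitionE hg) big_distrlr /= raddf_sum /=.
have e : forall (i : 'I_a.+1) (j : 'I_b.+1), pihomog mf (a + b) (pihomog mf i f * pihomog mf j g) =
    if (i + j == a + b)%N then pihomog mf i f * pihomog mf j g else 0.
  move=> i j; have hij := dhomogM (pihomogP mf i f) (pihomogP mf j g).
  case: eqP => [<-|ne]; first exact: pihomog_dE.
  by apply: pihomog_ne0 hij; apply/eqP.
under eq_bigr => i _ do (rewrite raddf_sum /=; under eq_bigr => j _ do rewrite e).
rewrite (bigD1 ord_max) //= (bigD1 ord_max) //= eqxx big1 ?addr0; last first.
  move=> j hj; case: eqP => // h; exfalso; move: hj; rewrite -(inj_eq val_inj) /=.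
  by have := ltn_ord j; lia.
rewrite big1 ?addr0 //.
move=> i hi; rewrite big1 // => j _; case: eqP => // h; exfalso; move: hi.
rewrite -(inj_eq val_inj) /=; have := ltn_ord i; have := ltn_ord j; lia.
Qed.

Lemma top_mul f g D d : D \is d.-homog for mf -> f * g = D -> f != 0 -> g != 0 ->
  top f * top g = D.
Proof.
move=> hD e hf hg.
have hf' := mpolySpred mf hf; have hg' := mpolySpred mf hg.
have hm := pihomog_mul (eq_leq hf') (eq_leq hg').
have nz : top f * top g != 0 by rewrite mulf_neq0 ?top_nz.
have hd : ((msz f).-1 + (msz g).-1)%N = d.
  apply/eqP; apply: contraNT nz => ne.
  by rewrite /top -hm e (pihomog_ne0 _ hD) // eq_sym.
by rewrite /top -hm e hd pihomog_dE.
Qed.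

End Top.

Section Ev.
Variable C : numClosedFieldType.
Implicit Types (p : {mpoly C[12]}) (x y z w : 'I_12 -> C).

Lemma mB0_coord (k : nat) (m : 'X_{1..12}) i : mB k m = 0%N -> blk k i -> m i = 0%N.
Proof.
move=> h hb; move/eqP: h; rewrite /mB sum_nat_eq0 => /forall_inP /(_ i hb) /eqP //.
Qed.

Lemma E0 (k : nat) p x y : p \is 0.-homog for (mBm k) -> (forall i, ~~ blk k i -> x i = y i) ->
  p.@[x] = p.@[y].
Proof.
move=> hp hxy; rewrite !mevalE; apply: eq_big_seq => m hm; congr (_ * _).
apply: eq_bigr => i _; case hb: (blk k i).
  by rewrite (mB0_coord (dhomog_mf hp hm) hb) !expr0.
by rewrite hxy ?hb.
Qed.

Lemma sum1 (m : 'X_{1..12}) (k : nat) : mB k m = 1%N ->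
  exists j, [/\ blk k j, m j = 1%N & forall i, blk k i -> i != j -> m i = 0%N].
Proof.
move=> h.
have [j hj] : exists j, blk k j && (m j != 0%N).
  apply/existsP; apply: contraT => /existsPn hn.
  have h0 : mB k m = 0%N by rewrite /mB big1 // => i hi; move: (hn i); rewrite hi /= negbK => /eqP.
  by rewrite h0 in h.
move/andP: hj => [hbj]; rewrite -lt0n => hmj.
move: h; rewrite /mB (bigD1 j) //= => h.
move: h; set S := (\sum_(i < 12 | _) _)%N => h.
have hr : S = 0%N by move: hmj h; lia.
exists j; split => //; first by move: hmj h; lia.
move=> i hbi hij; move/eqP: hr; rewrite sum_nat_eq0 => /forall_inP /(_ i).
by rewrite hbi hij => /(_ isT) /eqP.
Qed.

Lemma E1 (k : nat) p x y z (a b : C) : p \is 1.-homog for (mBm k) ->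
  (forall i, ~~ blk k i -> x i = z i /\ y i = z i) ->
  (forall i, blk k i -> z i = a * x i + b * y i) ->
  p.@[z] = a * p.@[x] + b * p.@[y].
Proof.
move=> hp hoff hon; rewrite !mevalE !mulr_sumr -big_split /=.
apply: eq_big_seq => m hm.
have [j [hbj hmj h0]] := sum1 (dhomog_mf hp hm).
pose G := \prod_(i < 12 | i != j) (if blk k i then 1 else z i ^+ m i).
have hG : forall t, (forall i, ~~ blk k i -> t i = z i) -> \prod_(i < 12 | i != j) t i ^+ m i = G.
  move=> t ht; apply: eq_bigr => i hij; case hb: (blk k i).
    by rewrite h0 ?expr0.
  by rewrite ht ?hb.
rewrite (bigD1 j) //= (bigD1 j (P := predT)) //= (bigD1 j (P := predT)) //=.
rewrite !hG ?hmj ?expr1 ?hon //; last by move=> i /hoff [].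
- ring.
- by move=> i /hoff [].
Qed.

End Ev.

Section Irr.
Variable C : numClosedFieldType.
Implicit Types (p f g h : {mpoly C[12]}) (x y : 'I_12 -> C).

Definition pt (k : nat) (c s : seq C) : 'I_12 -> C :=
  fun i => if blk k i then nth 0 s (i - 4 * k) else nth 0 c i.

Lemma blk_all (i : 'I_12) : [|| blk 0 i, blk 1 i | blk 2 i].
Proof. rewrite /blk; case: i => i hi /=; lia. Qed.

Lemma E1pt (k : nat) p c sx sy sz (a b : C) : p \is 1.-homog for (mBm k) ->
  (forall n, (n < 4)%N -> nth 0 sz n = a * nth 0 sx n + b * nth 0 sy n) ->
  p.@[pt k c sz] = a * p.@[pt k c sx] + b * p.@[pt k c sy].
Proof.
move=> hp hs; apply: (E1 hp) => [i|i]; rewrite /pt => hb.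
- by rewrite (negbTE hb).
- rewrite hb hs //; move: hb; rewrite /blk; lia.
Qed.

Lemma lin3 (k : nat) p c (a b d : C) : p \is 1.-homog for (mBm k) ->
  p.@[pt k c [:: a; b; 0; d]] = a * p.@[pt k c [:: 1; 0; 0; 0]] + b * p.@[pt k c [:: 0; 1; 0; 0]]
     + d * p.@[pt k c [:: 0; 0; 0; 1]].
Proof.
move=> hp.
rewrite (@E1pt k p c [:: a; b; 0; 0] [:: 0; 0; 0; 1] _ 1 d) //; last first.
  by case=> [|[|[|[|]]]] //= _; ring.
rewrite (@E1pt k p c [:: 1; 0; 0; 0] [:: 0; 1; 0; 0] _ a b) //; last first.
  by case=> [|[|[|[|]]]] //= _; ring.
ring.
Qed.

Lemma step (k j : nat) p x y : (j != k -> p \is 0.-homog for (mBm j)) ->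
  (forall i, blk k i -> x i = y i) ->
  p.@[x] = p.@[fun i => if blk j i then y i else x i].
Proof.
move=> hp hxy; have [e|ne] := eqVneq j k.
  apply: meval_eq => i; case: ifP => // hb; apply: hxy; by rewrite -e.
by apply: (E0 (hp ne)) => i /negbTE ->.
Qed.

Lemma E0pt (k : nat) h c c2 s : (forall j, (j < 3)%N -> j != k -> h \is 0.-homog for (mBm j)) ->
  h.@[pt k c s] = h.@[pt k c2 s].
Proof.
move=> hh.
have hxy : forall i, blk k i -> pt k c s i = pt k c2 s i by move=> i hb; rewrite /pt hb.
rewrite (@step k 0 h _ _ (fun j => hh 0%N isT j) hxy).
set m1 := (fun i => _).
have h1 : forall i, blk k i -> m1 i = pt k c2 s i by move=> i hb; rewrite /m1; case: ifP => // _; exact: hxy.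
rewrite (@step k 1 h _ _ (fun j => hh 1%N isT j) h1).
set m2 := (fun i => _).
have h2 : forall i, blk k i -> m2 i = pt k c2 s i by move=> i hb; rewrite /m2; case: ifP => // _; exact: h1.
rewrite (@step k 2 h _ _ (fun j => hh 2%N isT j) h2).
apply: meval_eq => i /=; rewrite /m2 /m1.
by case/or3P: (blk_all i) => hb; rewrite hb //; do 2 case: ifP => //.
Qed.

Lemma conic_sc (Au At Aw Bu Bt Bw : C) :
  Au*Bu = 0 -> Aw*Bw = 0 -> (Au+Aw)*(Bu+Bw) = -4%:R -> At*Bt = 1 ->
  (Au + 2%:R*At + Aw)*(Bu + 2%:R*Bt + Bw) = 0 ->
  (Au + 4%:R*At + 4%:R*Aw)*(Bu + 4%:R*Bt + 4%:R*Bw) = 0 ->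
  (Au + 6%:R*At + 9%:R*Aw)*(Bu + 6%:R*Bt + 9%:R*Bw) = 0 -> False.
Proof.
move=> H1 H2 H3 H4 E1 E2 E3.
have n4 : (-4%:R : C) != 0 by rewrite oppr_eq0 pnatr_eq0.
have n12 : (12%:R : C) != 0 by rewrite pnatr_eq0.
have t0 : At != 0 by apply: contra_eq_neq H4 => ->; rewrite mul0r eq_sym oner_eq0.
have b0 : Bt != 0 by apply: contra_eq_neq H4 => ->; rewrite mulr0 eq_sym oner_eq0.
move/eqP: H1; rewrite mulf_eq0 => /orP[/eqP a0|/eqP c0].
- have w0 : Aw != 0.
    by apply: contra_eq_neq H3 => hw; rewrite a0 hw add0r mul0r eq_sym.
  have bw : Bw = 0 by move/eqP: H2; rewrite mulf_eq0 (negbTE w0) => /eqP.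
  have : 12%:R * (Aw * Bt) = 3%:R * ((Au + 2%:R*At + Aw)*(Bu + 2%:R*Bt + Bw))
     - 3%:R * ((Au + 4%:R*At + 4%:R*Aw)*(Bu + 4%:R*Bt + 4%:R*Bw))
     + ((Au + 6%:R*At + 9%:R*Aw)*(Bu + 6%:R*Bt + 9%:R*Bw)) by rewrite a0 bw; ring.
  rewrite E1 E2 E3 !mulr0 subr0 addr0 => /eqP.
  by rewrite !mulf_eq0 (negbTE n12) (negbTE w0) (negbTE b0).
- have w0 : Bw != 0.
    by apply: contra_eq_neq H3 => hw; rewrite c0 hw add0r mulr0 eq_sym.
  have aw : Aw = 0 by move/eqP: H2; rewrite mulf_eq0 (negbTE w0) orbF => /eqP.
  have : 12%:R * (At * Bw) = 3%:R * ((Au + 2%:R*At + Aw)*(Bu + 2%:R*Bt + Bw))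
     - 3%:R * ((Au + 4%:R*At + 4%:R*Aw)*(Bu + 4%:R*Bt + 4%:R*Bw))
     + ((Au + 6%:R*At + 9%:R*Aw)*(Bu + 6%:R*Bt + 9%:R*Bw)) by rewrite c0 aw; ring.
  rewrite E1 E2 E3 !mulr0 subr0 addr0 => /eqP.
  by rewrite !mulf_eq0 (negbTE n12) (negbTE w0) (negbTE t0).
Qed.

Lemma Deval_mul f g x : Dpoly C = f * g -> Dform x = f.@[x] * g.@[x].
Proof. by move=> e; rewrite -Dpoly_eval e mevalM. Qed.

Lemma conic_gen (k : nat) (c : seq C) f g :
  Dpoly C = f * g -> f \is 1.-homog for (mBm k) -> g \is 1.-homog for (mBm k) ->
  Dform (pt k c [:: 1; 0; 0; 0]) = 0 -> Dform (pt k c [:: 0; 0; 0; 1]) = 0 ->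
  Dform (pt k c [:: 1; 0; 0; 1]) = -4%:R -> Dform (pt k c [:: 0; 1; 0; 0]) = 1 ->
  Dform (pt k c [:: 1; 2%:R; 0; 1]) = 0 -> Dform (pt k c [:: 1; 4%:R; 0; 4%:R]) = 0 ->
  Dform (pt k c [:: 1; 6%:R; 0; 9%:R]) = 0 -> False.
Proof.
move=> e hf hg d1 d2 d3 d4 d5 d6 d7.
have hv : forall a b d, Dform (pt k c [:: a; b; 0; d]) =
   (a * f.@[pt k c [:: 1; 0; 0; 0]] + b * f.@[pt k c [:: 0; 1; 0; 0]] + d * f.@[pt k c [:: 0; 0; 0; 1]]) *
   (a * g.@[pt k c [:: 1; 0; 0; 0]] + b * g.@[pt k c [:: 0; 1; 0; 0]] + d * g.@[pt k c [:: 0; 0; 0; 1]]).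
  by move=> a b d; rewrite (Deval_mul _ e) (lin3 c a b d hf) (lin3 c a b d hg).
apply: (@conic_sc (f.@[pt k c [:: 1; 0; 0; 0]]) (f.@[pt k c [:: 0; 1; 0; 0]]) (f.@[pt k c [:: 0; 0; 0; 1]])
   (g.@[pt k c [:: 1; 0; 0; 0]]) (g.@[pt k c [:: 0; 1; 0; 0]]) (g.@[pt k c [:: 0; 0; 0; 1]])).
- by rewrite -[RHS]d1 hv; ring.
- by rewrite -[RHS]d2 hv; ring.
- by rewrite -[RHS]d3 hv; ring.
- by rewrite -[RHS]d4 hv; ring.
- by rewrite -[RHS]d5 hv; ring.
- by rewrite -[RHS]d6 hv; ring.
- by rewrite -[RHS]d7 hv; ring.
Qed.

Lemma pure_gen (k : nat) (c c2 : seq C) h g :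
  Dpoly C = h * g ->
  (forall j, (j < 3)%N -> j != k -> h \is 0.-homog for (mBm j)) -> g \is 0.-homog for (mBm k) ->
  Dform (pt k c [:: 1; 0; 0; 0]) = 1 -> Dform (pt k c2 [:: 0; 0; 1; 0]) = 1 ->
  Dform (pt k c2 [:: 1; 0; 0; 0]) = 0 -> Dform (pt k c [:: 0; 0; 1; 0]) = 0 -> False.
Proof.
move=> e hh hg d1 d2 d3 d4.
have eg : forall c' s s', g.@[pt k c' s] = g.@[pt k c' s'].
  by move=> c' s s'; apply: (E0 hg) => i /negbTE hb; rewrite /pt hb.
have : Dform (pt k c [:: 1; 0; 0; 0]) * Dform (pt k c2 [:: 0; 0; 1; 0]) =
       Dform (pt k c2 [:: 1; 0; 0; 0]) * Dform (pt k c [:: 0; 0; 1; 0]).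
  rewrite !(Deval_mul _ e) (E0pt c c2 [:: 1; 0; 0; 0] hh) (E0pt c2 c [:: 0; 0; 1; 0] hh).
  rewrite (eg c [:: 1; 0; 0; 0] [:: 0; 0; 1; 0]) (eg c2 [:: 0; 0; 1; 0] [:: 1; 0; 0; 0]); ring.
by rewrite d1 d2 d3 d4 mul1r mul0r => /eqP; rewrite oner_eq0.
Qed.

End Irr.

Section Data.
Variable C : numClosedFieldType.
Implicit Types (f g h : {mpoly C[12]}).

Ltac evD := rewrite /Dform /kk0 /kk1 /kk2 /pt /blk !inordK //=; ring.

Definition cc0 : seq C := [:: 0; 0; 0; 0; 0; 1; 1; 0; 0; 1; 1; 0].
Definition cc1 : seq C := [:: 0; 1; 1; 0; 0; 0; 0; 0; 0; 1; 1; 0].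
Definition cc2 : seq C := [:: 0; 1; 1; 0; 0; 1; 1; 0; 0; 0; 0; 0].

Lemma conic0 f g : Dpoly C = f * g -> f \is 1.-homog for (mBm 0) -> g \is 1.-homog for (mBm 0) -> False.
Proof. move=> e hf hg; apply: (conic_gen (c := cc0) e hf hg); rewrite /cc0; evD. Qed.
Lemma conic1 f g : Dpoly C = f * g -> f \is 1.-homog for (mBm 1) -> g \is 1.-homog for (mBm 1) -> False.
Proof. move=> e hf hg; apply: (conic_gen (c := cc1) e hf hg); rewrite /cc1; evD. Qed.
Lemma conic2 f g : Dpoly C = f * g -> f \is 1.-homog for (mBm 2) -> g \is 1.-homog for (mBm 2) -> False.
Proof. move=> e hf hg; apply: (conic_gen (c := cc2) e hf hg); rewrite /cc2; evD. Qed.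

Definition pa0 : seq C := [:: 0; 0; 0; 0; 0; 0; 0; 1; 0; 1; 0; 0].
Definition pb0 : seq C := [:: 0; 0; 0; 0; 0; 0; 0; 1; 1; 0; 0; 0].
Definition pa1 : seq C := [:: 0; 0; 0; 1; 0; 0; 0; 0; 0; 0; 1; 0].
Definition pb1 : seq C := [:: 0; 0; 0; 1; 0; 0; 0; 0; 1; 0; 0; 0].
Definition pa2 : seq C := [:: 0; 0; 0; 1; 0; 0; 1; 0; 0; 0; 0; 0].
Definition pb2 : seq C := [:: 0; 0; 0; 1; 1; 0; 0; 0; 0; 0; 0; 0].

Lemma pure0 h g : Dpoly C = h * g -> h \is 0.-homog for (mBm 1) -> h \is 0.-homog for (mBm 2) ->
  g \is 0.-homog for (mBm 0) -> False.
Proof.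
move=> e h1 h2 hg; apply: (pure_gen (c := pa0) (c2 := pb0) e _ hg); try by rewrite /pa0 /pb0; evD.
by move=> j hj hjk; case: j hj hjk => [|[|[|]]].
Qed.
Lemma pure1 h g : Dpoly C = h * g -> h \is 0.-homog for (mBm 0) -> h \is 0.-homog for (mBm 2) ->
  g \is 0.-homog for (mBm 1) -> False.
Proof.
move=> e h1 h2 hg; apply: (pure_gen (c := pa1) (c2 := pb1) e _ hg); try by rewrite /pa1 /pb1; evD.
by move=> j hj hjk; case: j hj hjk => [|[|[|]]].
Qed.
Lemma pure2 h g : Dpoly C = h * g -> h \is 0.-homog for (mBm 0) -> h \is 0.-homog for (mBm 1) ->
  g \is 0.-homog for (mBm 2) -> False.
Proof.
move=> e h1 h2 hg; apply: (pure_gen (c := pa2) (c2 := pb2) e _ hg); try by rewrite /pa2 /pb2; evD.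
by move=> j hj hjk; case: j hj hjk => [|[|[|]]].
Qed.

Lemma Dpoly_nz : Dpoly C != 0.
Proof.
apply/eqP => e; have := Dpoly_eval (pt 0 pa0 [:: 1; 0; 0; 0]); rewrite e meval0.
have -> : Dform (pt 0 pa0 [:: 1; 0; 0; 0]) = 1 by rewrite /pa0; evD.
by move/eqP; rewrite eq_sym oner_eq0.
Qed.

Lemma mdeg_split (m : 'X_{1..12}) : mdeg m = (mB 0 m + mB 1 m + mB 2 m)%N.
Proof.
rewrite mdegE /mB !(big_mkcond (fun i => blk _ i)) -!big_split /=.
apply: eq_bigr => i _; rewrite /blk; case: i => i hi /=.
by do 3 case: ifP; lia.
Qed.

Lemma final f g a0 a1 a2 b0 b1 b2 : Dpoly C = f * g ->
  f \is a0.-homog for (mBm 0) -> f \is a1.-homog for (mBm 1) -> f \is a2.-homog for (mBm 2) ->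
  g \is b0.-homog for (mBm 0) -> g \is b1.-homog for (mBm 1) -> g \is b2.-homog for (mBm 2) ->
  (a0 + b0 = 2)%N -> (a1 + b1 = 2)%N -> (a2 + b2 = 2)%N ->
  (1 <= a0 + a1 + a2)%N -> (1 <= b0 + b1 + b2)%N -> False.
Proof.
move=> e Hf0 Hf1 Hf2 Hg0 Hg1 Hg2 s0 s1 s2 sa sb.
have e' : Dpoly C = g * f by rewrite e mulrC.
have eb0 : b0 = (2 - a0)%N by lia.
have eb1 : b1 = (2 - a1)%N by lia.
have eb2 : b2 = (2 - a2)%N by lia.
rewrite eb0 in Hg0; rewrite eb1 in Hg1; rewrite eb2 in Hg2; rewrite eb0 eb1 eb2 in sb.
have la0 : (a0 <= 2)%N by lia. have la1 : (a1 <= 2)%N by lia. have la2 : (a2 <= 2)%N by lia.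
clear eb0 eb1 eb2 s0 s1 s2.
case: a0 Hf0 Hg0 sa sb la0 => [|[|[|a0]]] Hf0 Hg0 sa sb la0;
case: a1 Hf1 Hg1 sa sb la1 => [|[|[|a1]]] Hf1 Hg1 sa sb la1;
case: a2 Hf2 Hg2 sa sb la2 => [|[|[|a2]]] Hf2 Hg2 sa sb la2;
first [ lia | exact: (conic0 e Hf0 Hg0) | exact: (conic1 e Hf1 Hg1) | exact: (conic2 e Hf2 Hg2)
      | exact: (pure0 e Hf1 Hf2 Hg0) | exact: (pure1 e Hf0 Hf2 Hg1) | exact: (pure2 e Hf0 Hf1 Hg2)
      | exact: (pure0 e' Hg1 Hg2 Hf0) | exact: (pure1 e' Hg0 Hg2 Hf1) | exact: (pure2 e' Hg0 Hg1 Hf2) ].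
Qed.

End Data.

Section Fin.
Variable C : numClosedFieldType.

Lemma homog6 : Dpoly C \is 6.-homog.
Proof.
have := @D_homog C mdeg 1 1 1; apply => i _; exact: mdeg1.
Qed.

Lemma homogB (k : nat) : (k < 3)%N -> Dpoly C \is 2.-homog for (mBm k).
Proof.
move=> hk.
have := @D_homog C (mBm k) (k == 0)%N (k == 1)%N (k == 2)%N.
have -> : (((k == 0) + (k == 1) + (k == 2)) * 2 = 2)%N by case: k hk => [|[|[|]]].
apply => i hi; rewrite /mBm /= mBU /blk inordK; try lia; case: k hk => [|[|[|]]] //= _; lia.
Qed.

Lemma D_irr : mirreducible (Dpoly C).
Proof.
have hD6 := homog6.
split.
  have hm := mlead_supp (Dpoly_nz C).
  have := msize_mdeg_lt hm; rewrite (dhomog_mf hD6 hm); lia.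
move=> q r e.
case: (leqP (msize q) 1) => hq; first by left.
case: (leqP (msize r) 1) => hr; first by right.
exfalso.
have q0 : q != 0 by apply: contraTneq hq => ->; rewrite msize0.
have r0 : r != 0 by apply: contraTneq hr => ->; rewrite msize0.
pose f1 := top mdeg q; pose g1 := top mdeg r.
have e1 : f1 * g1 = Dpoly C := top_mul hD6 (esym e) q0 r0.
have f1h : f1 \is (msize q).-1.-homog := top_homog _ q.
have f10 : f1 != 0 := top_nz _ q0. have g10 : g1 != 0 := top_nz _ r0.
pose f2 := top (mBm 0) f1; pose g2 := top (mBm 0) g1.
have e2 : f2 * g2 = Dpoly C := top_mul (homogB (isT : (0 < 3)%N)) e1 f10 g10.
have f20 : f2 != 0 := top_nz _ f10. have g20 : g2 != 0 := top_nz _ g10.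
pose f3 := top (mBm 1) f2; pose g3 := top (mBm 1) g2.
have e3 : f3 * g3 = Dpoly C := top_mul (homogB (isT : (1 < 3)%N)) e2 f20 g20.
have f30 : f3 != 0 := top_nz _ f20. have g30 : g3 != 0 := top_nz _ g20.
pose f4 := top (mBm 2) f3; pose g4 := top (mBm 2) g3.
have e4 : f4 * g4 = Dpoly C := top_mul (homogB (isT : (2 < 3)%N)) e3 f30 g30.
have f40 : f4 != 0 := top_nz _ f30. have g40 : g4 != 0 := top_nz _ g30.
have Hfm : f4 \is (msize q).-1.-homog by do 3 apply: top_keep.
have Hgm : g4 \is (msize r).-1.-homog by do 3 apply: top_keep; exact: top_homog.
have Hf0 : f4 \is (mmeasure (mBm 0) f1).-1.-homog for (mBm 0) by do 2 apply: top_keep; exact: top_homog.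
have Hg0 : g4 \is (mmeasure (mBm 0) g1).-1.-homog for (mBm 0) by do 2 apply: top_keep; exact: top_homog.
have Hf1 : f4 \is (mmeasure (mBm 1) f2).-1.-homog for (mBm 1) by apply: top_keep; exact: top_homog.
have Hg1 : g4 \is (mmeasure (mBm 1) g2).-1.-homog for (mBm 1) by apply: top_keep; exact: top_homog.
have Hf2 : f4 \is (mmeasure (mBm 2) f3).-1.-homog for (mBm 2) by exact: top_homog.
have Hg2 : g4 \is (mmeasure (mBm 2) g3).-1.-homog for (mBm 2) by exact: top_homog.
clearbody f1 g1 f2 g2 f3 g3 f4 g4.
have [dq Hfm'] : exists d, f4 \is d.-homog by eexists; exact: Hfm.
have dq1 : (1 <= dq)%N.
  move: (dhomog_uniq f40 Hfm Hfm') hq; move: (mmeasure mdeg q) => n <-.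
  by case: n => [|[|n]].
have [dr Hgm'] : exists d, g4 \is d.-homog by eexists; exact: Hgm.
have dr1 : (1 <= dr)%N.
  move: (dhomog_uniq g40 Hgm Hgm') hr; move: (mmeasure mdeg r) => n <-.
  by case: n => [|[|n]].
have [a0 Hf0'] : exists d, f4 \is d.-homog for (mBm 0) by eexists; exact: Hf0.
have [a1 Hf1'] : exists d, f4 \is d.-homog for (mBm 1) by eexists; exact: Hf1.
have [a2 Hf2'] : exists d, f4 \is d.-homog for (mBm 2) by eexists; exact: Hf2.
have [b0 Hg0'] : exists d, g4 \is d.-homog for (mBm 0) by eexists; exact: Hg0.
have [b1 Hg1'] : exists d, g4 \is d.-homog for (mBm 1) by eexists; exact: Hg1.
have [b2 Hg2'] : exists d, g4 \is d.-homog for (mBm 2) by eexists; exact: Hg2.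
clear Hfm Hgm Hf0 Hf1 Hf2 Hg0 Hg1 Hg2.
have sum2 : forall k d1 d2, (k < 3)%N -> f4 \is d1.-homog for (mBm k) -> g4 \is d2.-homog for (mBm k) -> (d1 + d2 = 2)%N.
  move=> k d1 d2 hk ha hb; apply: (dhomog_uniq (Dpoly_nz C)) (homogB hk).
  by rewrite -e4; apply: dhomogM.
have sums : forall (p : {mpoly C[12]}) (d a0 a1 a2 : nat), p != 0 -> p \is d.-homog -> p \is a0.-homog for (mBm 0) ->
    p \is a1.-homog for (mBm 1) -> p \is a2.-homog for (mBm 2) -> d = (a0 + a1 + a2)%N.
  move=> p d c0 c1 c2 p0 hd h0 h1 h2; have hm := mlead_supp p0.
  have ed : mdeg (mlead p) = d by exact: (dhomog_mf hd hm).
  have ea0 : mB 0 (mlead p) = c0 by exact: (dhomog_mf h0 hm).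
  have ea1 : mB 1 (mlead p) = c1 by exact: (dhomog_mf h1 hm).
  have ea2 : mB 2 (mlead p) = c2 by exact: (dhomog_mf h2 hm).
  by rewrite -ed -ea0 -ea1 -ea2; exact: mdeg_split.
have s0 := sum2 0%N _ _ isT Hf0' Hg0'.
have s1 := sum2 1%N _ _ isT Hf1' Hg1'.
have s2 := sum2 2%N _ _ isT Hf2' Hg2'.
have sa := sums _ _ _ _ _ f40 Hfm' Hf0' Hf1' Hf2'.
have sb := sums _ _ _ _ _ g40 Hgm' Hg0' Hg1' Hg2'.
apply: (final (esym e4) Hf0' Hf1' Hf2' Hg0' Hg1' Hg2' s0 s1 s2); [by rewrite -sa | by rewrite -sb].
Qed.

End Fin.

Theorem theorem3p11 (C : numClosedFieldType) :
  exists D : {mpoly C[12]},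
    [/\ D \is 6.-homog,
        mirreducible D
      & forall v : 'I_12 -> C, (exists j, v j != 0) ->
          (in_discriminant v <-> D.@[v] = 0)].
Proof.
exists (Dpoly C); split; [exact: homog6 | exact: D_irr | ].
by move=> v _; rewrite Dpoly_eval; exact: disc_iff.
Qed.
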